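(* Let $\Omega=\{\Omega_1,\dots,\Omega_N\}$ be a finite set of points with distance function $d$, let $p\notin\Omega$ be a further point (with $d$ defined on $\Omega\cup\{p\}$), and let $r\in\{1,\dots,N\}$. Define, for $t\in\{1,\dots,N\}$, $f(t)=\max\big(d(p,\Omega_t),\ MMJ(\Omega_t,\Omega_r~|~\Omega)\big)$, and $\mathbb{X}=\{f(t): t\in\{1,\dots,N\}\}$. Then $MMJ(p,\Omega_r~|~\Omega+p)=\min(\mathbb{X})$, where $\Omega+p=\Omega\cup\{p\}$.
   Context: $d$ is a distance function (e.g. Euclidean distance) on the points considered, symmetric, nonnegative, with $d(x,x)=0$. For a finite point set $S$, a path from $i$ to $j$ in $S$ is a finite sequence of points of $S$ (at least two) starting at $i$ and ending at $j$, with no repeated points except that start and end may coincide when $i=j$. A jump of a path is the distance $d(x,y)$ between two consecutive points $x,y$, and $max\_jump$ of a path is its largest jump. The Min-Max-Jump distance with context $S$ is $MMJ(i,j~|~S)=\min\{max\_jump(\epsilon): \epsilon \text{ a path from } i \text{ to } j \text{ in } S\}$ for $i,j\in S$, with $MMJ(i,i~|~S)=0$. *)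

(* Defs.v *)
From HB Require Import structures.
From mathcomp Require Import all_boot all_order all_algebra.
From mathcomp Require Import boolp classical_sets reals.
Set Implicit Arguments. Unset Strict Implicit. Unset Printing Implicit Defensive.
Import Order.TTheory GRing.Theory Num.Theory.
Local Open Scope ring_scope.
Local Open Scope classical_set_scope.

Section MMJ.
Variables (T : eqType) (R : realType) (d : T -> T -> R).

Definition is_path (S : seq T) (i j : T) (s : seq T) : bool :=
  match s with
  | [::] => false
  | x :: s' =>
      [&& (2 <= size s)%N, x == i, last x s' == j, all (mem S) s &
          (if i == j then uniq s' else uniq s)]
  end.

Definition jumps (s : seq T) : seq R :=
  match s with [::] => [::] | x :: s' => pairmap d x s' end.

Definition max_jump (s : seq T) : R := foldr Num.max 0 (jumps s).

(* MMJ(i, j | S): the minimum over all paths from i to j in S of the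
   max_jump (the set of such values is finite and nonempty for i, j in S,
   so its infimum is its minimum); MMJ(i, i | S) = 0. *)
Definition MMJ (S : seq T) (i j : T) : R :=
  if i == j then 0
  else inf [set max_jump s | s in [set s | is_path S i j s]].

End MMJ.

(* Main.v *)
Require Import Defs.
From HB Require Import structures.
From mathcomp Require Import all_boot all_order all_algebra.
From mathcomp Require Import boolp classical_sets reals.
Import Order.TTheory GRing.Theory Num.Theory.
Local Open Scope ring_scope.
Local Open Scope classical_set_scope.

Lemma amin (R : realType) n (g : 'I_n -> R) (i0 : 'I_n) : exists i, forall j, g i <= g j.
Proof.
exists (Order.arg_min i0 xpredT g).
by case: arg_minP => // i _ H j; exact: H.
Qed.

Lemma mj_ge0 (T : eqType) (R : realType) (d : T -> T -> R) s : 0 <= max_jump d s.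
Proof.
case: s => [|x s]; rewrite /max_jump //=.
elim: s x => [|y s IH] x //=.
by rewrite le_max IH orbT.
Qed.

Lemma max_mono (R : realType) (a b a' b' : R) : a <= a' -> b <= b' ->
  Num.max a b <= Num.max a' b'.
Proof.
by move=> h1 h2; rewrite ge_max !le_max h1 h2 orbT.
Qed.

Theorem corollary3p4 (T : eqType) (R : realType) (d : T -> T -> R)
    (N : nat) (Omega : 'I_N -> T) (p : T) (r : 'I_N) :
  injective Omega ->
  (forall t : 'I_N, p != Omega t) ->
  (forall x y, x \in p :: [seq Omega t | t <- enum 'I_N] ->
     y \in p :: [seq Omega t | t <- enum 'I_N] -> d x y = d y x) ->
  (forall x y, x \in p :: [seq Omega t | t <- enum 'I_N] ->
     y \in p :: [seq Omega t | t <- enum 'I_N] -> 0 <= d x y) ->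
  (forall x, x \in p :: [seq Omega t | t <- enum 'I_N] -> d x x = 0) ->
  let f := fun t : 'I_N =>
    Num.max (d p (Omega t)) (MMJ d [seq Omega t | t <- enum 'I_N] (Omega t) (Omega r)) in
  let m := MMJ d (p :: [seq Omega t | t <- enum 'I_N]) p (Omega r) in
  (exists t : 'I_N, m = f t) /\ (forall t : 'I_N, m <= f t).
Proof.
move=> Oinj pO _ _ _ f m.
set S := [seq Omega t | t <- enum 'I_N].
have pS : p \notin S.
  by apply/mapP => -[t _ ept]; move: (pO t); rewrite ept eqxx.
have inS t : Omega t \in S by apply: map_f; rewrite mem_enum.
have pr : p != Omega r by [].
set A := [set max_jump d s | s in [set s : seq T | is_path (p :: S) p (Omega r) s]].
have mA : m = inf A by rewrite /m /MMJ (negbTE pr).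
have hlA : has_lbound A by exists 0 => _ [s _ <-]; exact: mj_ge0.
have pathA2 : A (max_jump d [:: p; Omega r]).
  exists [:: p; Omega r] => //=.
  by rewrite /is_path /= (negbTE pr) !eqxx /= !inE inS eqxx orbT /= pr.
have Ane : nonempty A by eexists; exact: pathA2.
have ub : forall t, m <= f t.
  move=> t; rewrite /f mA.
  case: (boolP (Omega t == Omega r)) => [/eqP etr|ntr].
    rewrite /MMJ etr eqxx.
    by apply: ge_inf => //; exact: pathA2.
  rewrite /MMJ (negbTE ntr).
  set B := [set max_jump d s | s in [set s : seq T | is_path S (Omega t) (Omega r) s]].
  have Bne : nonempty B.
    exists (max_jump d [:: Omega t; Omega r]); exists [:: Omega t; Omega r] => //=.
    by rewrite /is_path /= (negbTE ntr) !eqxx /= !inS /= inE ntr.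
  rewrite leNgt; apply/negP; rewrite gt_max => /andP[cm Bm].
  have [_ [s ps <-] sm] := inf_lt Bne Bm.
  have : A (max_jump d (p :: s)).
    exists (p :: s) => //.
    move: ps; case: s sm => [|x s] //= _.
    rewrite /= (negbTE ntr) (negbTE pr) => /and5P[_ /eqP -> lx alls us].
    have {}alls : all (mem S) (Omega t :: s) by exact: alls.
    have pn : p \notin Omega t :: s.
      by apply/negP => /(allP alls) /= pin; move/negP: pS; apply.
    have al : all (mem (p :: S)) s.
      by apply/allP => z zs; rewrite inE; apply/orP; right; apply: (allP alls); rewrite inE zs orbT.
    move/andP: us => [us1 us2].
    by rewrite /is_path /= eqxx lx !inE eqxx inS orbT /= al pn us1 us2.
  move=> /(ge_inf hlA) hle.
  move: ps sm; case: s hle => [|x s] //= hle.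
  rewrite (negbTE ntr) => /and5P[_ /eqP xt _ _ _] sm.
  have : inf A <= Num.max (d p (Omega t)) (max_jump d (x :: s)) by rewrite -xt.
  by rewrite leNgt gt_max cm sm.
split=> //.
have [t0 Ht0] : exists t0, forall t, f t0 <= f t by exact: amin r.
exists t0; apply/eqP; rewrite eq_le ub /= mA.
apply: lb_le_inf => // _ [s ps <-].
move: ps; case: s => [|x [|y s]] //=.
rewrite /is_path /= (negbTE pr) => /and4P[/eqP xp ly ally uys].
subst x.
move: uys => /andP[]; rewrite inE negb_or => /andP[py pns] uys.
move: ally => /and3P[_ yin alls].
have yS : y \in S by move: yin; rewrite inE eq_sym (negbTE py).
have [t yt] : exists t, y = Omega t by move/mapP: yS => [t _ ->]; exists t.
apply: le_trans (Ht0 t) _.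
rewrite /f -yt /max_jump /= -/(max_jump d (y :: s)).
apply: max_mono => //.
rewrite /MMJ; case: ifP => [_|nyr]; first exact: mj_ge0.
apply: ge_inf.
  by exists 0 => _ [s' _ <-]; exact: mj_ge0.
exists (y :: s) => //.
rewrite /is_path /= nyr eqxx ly uys yS /= andbT.
apply/andP; split.
  by case: s ly {alls pns uys} => //= /eqP yr; move: nyr; rewrite yr eqxx.
apply/allP => z zin; move/allP: alls => /(_ z zin); rewrite inE => /orP[/eqP zp|//].
by move: pns; rewrite -zp zin.
Qed.
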